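(* Let $\lambda$ be a complex algebraic number of degree $d$ and height $H$, and assume $|\lambda|\neq 1$. Then \[ \big||\lambda|-1\big| > \frac{1}{\sqrt{3}\,(2d+2)^{2d+3}\,2^{2d}\,(d!)^{2d}\,(d+1)^{2d(d-1)}\,H^{2d^2}}. \] In particular, if the minimal polynomial of $\lambda$ has degree at most $d$ and coefficients of bitsize at most $\tau$, then $\big||\lambda|-1\big| > 2^{-(\tau d)^{O(1)}}$.
   Context: The minimal polynomial of an algebraic number $\mu$ is the unique irreducible polynomial $p_\mu\in\mathbb{Z}[x]$ with pairwise coprime coefficients (and positive leading coefficient) vanishing at $\mu$. The height of $\mu$ is the maximum absolute value of the coefficients of $p_\mu$; the degree of $\mu$ is the degree of $p_\mu$. *)

(* Defs.v *)
From HB Require Import structures.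
From mathcomp Require Import all_boot all_order all_algebra all_field.
Set Implicit Arguments. Unset Strict Implicit. Unset Printing Implicit Defensive.
Import Order.TTheory GRing.Theory Num.Theory.
Local Open Scope ring_scope.

Definition coef_gcd (p : {poly int}) : int :=
  \big[gcdz/0]_(i < size p) p`_i.

Definition irreducible_Zpoly (p : {poly int}) : Prop :=
  p != 0 /\ ~~ (p \is a GRing.unit) /\
  forall a b : {poly int}, p = a * b -> a \is a GRing.unit \/ b \is a GRing.unit.

Definition is_minpoly_Z (mu : algC) (p : {poly int}) : Prop :=
  [/\ irreducible_Zpoly p, coef_gcd p = 1, 0 < lead_coef p
    & root (map_poly intr p : {poly algC}) mu].

Definition zdeg (p : {poly int}) : nat := (size p).-1.
Definition zheight (p : {poly int}) : nat := \max_(i < size p) absz (p`_i)%R.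

(* Main.v *)
Require Import Defs.
From HB Require Import structures.
From mathcomp Require Import all_boot all_order all_algebra all_field.
From mathcomp Require Import ring zify.
Import Order.TTheory GRing.Theory Num.Theory.
Local Open Scope ring_scope.

Section AutOfHom.
Variables (L : fieldExtType rat) (g : 'End(L)) (hg : kHom 1 fullv g).
Definition hfun : L -> L := fun x => g x.
Fact hfun_zmod : zmod_morphism hfun.
Proof. by move=> a b; rewrite /hfun raddfB. Qed.
Fact hfun_mon : monoid_morphism hfun.
Proof. exact/kHom_monoid_morphism. Qed.
HB.instance Definition _ := GRing.isZmodMorphism.Build L L hfun hfun_zmod.
HB.instance Definition _ := GRing.isMonoidMorphism.Build L L hfun hfun_mon.
Definition hrm : {rmorphism L -> L} := hfun.
End AutOfHom.

Lemma aut_conj (x y : algC) : root (minCpoly x) y ->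
  exists nu : {rmorphism algC -> algC}, nu x = y.
Proof.
move=> ry.
have [q [Dq mon_q] min_q] := minCpolyP x.
have [r Dr] := closed_field_poly_normal (minCpoly x).
rewrite (monicP (minCpoly_monic x)) scale1r in Dr.
have rx : x \in r by rewrite -root_prod_XsubC -Dr root_minCpoly.
have ry' : y \in r by rewrite -root_prod_XsubC -Dr.
have [Qs [QsC [s1 Ds1 gen]]] := num_field_exists r.
have [x1 x1s Dx1] : exists2 x1, x1 \in s1 & x = QsC x1.
  by apply/mapP; rewrite Ds1.
have [y1 y1s Dy1] : exists2 y1, y1 \in s1 & y = QsC y1.
  by apply/mapP; rewrite Ds1.
have compC (m : {poly rat}) : map_poly QsC (map_poly (in_alg Qs) m) = map_poly ratr m.
  rewrite -map_poly_comp; apply: eq_map_poly => a.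
  by rewrite /= rmorphZ_num rmorph1 mulr1.
pose qs := map_poly (in_alg Qs) q.
have root_qs z : root qs z = root (minCpoly x) (QsC z).
  by rewrite Dq -compC fmorph_root.
have Kqs : qs \is a polyOver 1%VS by apply/polyOver1P; exists q.
have qs_dv : qs %| minPoly 1 x1.
  have [m Dm] := polyOver1P (minPolyOver 1 x1).
  have : root (map_poly ratr m) x.
    by rewrite -compC -Dm Dx1 fmorph_root root_minPoly.
  by rewrite min_q => qm; rewrite Dm /qs dvdp_map.
have rmy : root (minPoly 1 x1) y1.
  by apply: root_dvdp qs_dv _; rewrite root_qs -Dy1.
pose f := kHomExtend 1 \1 x1 y1.
have rmy' : root (map_poly \1%VF (minPoly 1 x1)) y1 by rewrite lfun1_poly.
have homf : kHom 1 <<1; x1>> f.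
  by apply: kHomExtendP => //; apply: kHom1.
have split : splittingFieldFor <<1; x1>> qs fullv.
  exists s1.
    suff -> : qs = \prod_(z <- s1) ('X - z%:P) by apply: eqpxx.
    apply: (@map_poly_inj _ _ QsC).
    rewrite compC -Dq Dr rmorph_prod -Ds1 big_map; apply: eq_bigr => z _.
    by rewrite rmorphB /= map_polyX map_polyC.
  apply/eqP; rewrite eqEsubv subvf /= -gen adjoin_seqSl //.
  exact: sub1v.
have [g homg Dg] := kHom_extends (sub1v _) homf Kqs split.
have gx1 : g x1 = y1.
  rewrite -Dg ?memv_adjoin //.
  by rewrite /f (kHomExtend_val (kHom1 1 1)).
have [nu Dnu] := extend_algC_subfield_aut QsC (@hrm _ _ homg).
exists nu; by rewrite Dx1 -Dnu /= /hfun gx1 Dy1.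
Qed.

Lemma cauchy_bound (n : nat) (c : 'I_n -> algC) (a z h : algC) :
  (0 < n)%N -> (forall i, `|c i| <= h) -> `|a| <= h ->
  a * z ^+ n + \sum_(i < n) c i * z ^+ i = 0 -> `|a * z| <= n%:R * h.
Proof.
move=> n0 ch ah E.
have h0 : 0 <= h by apply: le_trans ah.
have hnh : h <= n%:R * h by rewrite ler_peMl // ler1n.
have [z1|z1] := real_leP (normr_real z) (@real1 _).
  rewrite normrM; apply: le_trans hnh; apply: le_trans ah.
  by rewrite ler_piMr.
have zp : 0 < `|z| by apply: lt_trans z1.
have : `|a| * `|z| ^+ n <= n%:R * h * `|z| ^+ n.-1.
  have -> : `|a| * `|z| ^+ n = `|\sum_(i < n) c i * z ^+ i|.
    have E' : a * z ^+ n = - \sum_(i < n) c i * z ^+ i.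
      by apply/eqP; rewrite -addr_eq0 E.
    by rewrite -normrX -normrM E' normrN.
  apply: le_trans (ler_norm_sum _ _ _) _.
  rewrite -mulrA mulr_natl -[n in _ *+ n]card_ord -sumr_const.
  apply: ler_sum => i _.
  rewrite normrM normrX ler_pM ?exprn_ge0 //.
  apply: ler_weXn2l; first by apply: ltW.
  by rewrite -ltnS prednK.
rewrite -(prednK n0) exprS mulrA normrM => H.
by rewrite -(ler_pM2r (exprn_gt0 n.-1 zp)).
Qed.

Lemma minC_uniq (x : algC) r : minCpoly x = \prod_(y <- r) ('X - y%:P) -> uniq r.
Proof.
have [q [Dq mq] minq] := minCpolyP x.
move=> Dr; rewrite -separable_prod_XsubC -Dr Dq separable_map.
have q0 : q != 0 by apply: monic_neq0.
have irr : irreducible_poly q.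
  apply/(@subfx_irreducibleP _ _ ratr x) => //; first by rewrite -Dq root_minCpoly.
  by move=> q' rq' nq'; rewrite minq in rq'; apply: dvdp_leq.
have szq : (1 < size q)%N.
  by have := size_minCpoly x; rewrite Dq size_map_poly.
have dq0 : q^`() != 0.
  apply/negP => /eqP H.
  have := congr1 (fun s : {poly rat} => s`_(size q).-2) H; rewrite /= coef_deriv coef0.
  have -> : (size q).-2.+1 = (size q).-1 by case: (size q) szq => [|[|n]].
  move/eqP; rewrite mulrn_eq0 -lead_coefE lead_coef_eq0 (negbTE q0) /=.
  by case: (size q) szq => [|[|n]].
rewrite unlock.
have [g1|gq] := irredp_XsubCP irr (dvdp_gcdl q q^`()).
  by rewrite /coprimep (eqp_size g1) size_poly1.
have : q %| q^`() by rewrite -(eqp_dvdl _ gq) dvdp_gcdr.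
move/(dvdp_leq dq0); rewrite leqNgt lt_size_deriv //.
Qed.


Lemma rearr (R : comNzRingType) (x u v w : R) : x * u * (v * w) = u * v * (x * w).
Proof. ring. Qed.

Lemma horner_split (p : {poly int}) (z : algC) : (0 < size p)%N ->
  (map_poly intr p).[z] =
  \sum_(i < (size p).-1) (p`_i)%:~R * z ^+ i + (lead_coef p)%:~R * z ^+ (size p).-1.
Proof.
move=> sp.
rewrite horner_coef size_map_inj_poly; [|exact: intr_inj|exact: rmorph0].
rewrite -(prednK sp) big_ord_recr /= coef_map lead_coefE.
by congr (_ + _); apply: eq_bigr => i _; rewrite coef_map.
Qed.

Lemma lead_Aint (p : {poly int}) (z : algC) : (1 < size p)%N ->
  root (map_poly intr p) z -> (lead_coef p)%:~R * z \in Aint.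
Proof.
move=> sp rz; set n := (size p).-1; set a' : algC := (lead_coef p)%:~R.
have n0 : (0 < n)%N by rewrite /n -ltnS prednK // ltnW.
have E : \sum_(i < n) (p`_i)%:~R * z ^+ i + a' * z ^+ n = 0.
  by rewrite /n /a' -horner_split ?(rootP rz) // ltnW.
pose Q : {poly algC} := \poly_(i < n.+1)
  (if i == n then 1 else ((p`_i * (lead_coef p) ^+ (n.-1 - i))%:~R)).
apply: (@root_monic_Aint Q).
- rewrite /root horner_poly big_ord_recr /= eqxx mul1r.
  rewrite (eq_bigr (fun i : 'I_n => a' ^+ n.-1 * ((p`_i)%:~R * z ^+ i))); last first.
    move=> i _; rewrite /= (ltn_eqF (ltn_ord i)) rmorphM rmorphXn /= -/a'.
    have -> : a' ^+ n.-1 = a' ^+ (n.-1 - i) * a' ^+ i.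
      by rewrite -exprD subnK // -ltnS prednK.
    by rewrite exprMn rearr.
  have an : a' ^+ n = a' ^+ n.-1 * a' by rewrite -exprSr prednK.
  by rewrite -mulr_sumr exprMn an -mulrA -mulrDr E mulr0.
- by rewrite monicE lead_coef_poly //= ?eqxx ?oner_eq0.
- apply/polyOverP => i; rewrite coef_poly.
  case: (i < n.+1)%N; last exact: rpred0.
  by case: (i == n); [exact: rpred1 | exact: rpred_int].
Qed.

Lemma coef_height (p : {poly int}) i : (absz (p`_i)%R <= zheight p)%N.
Proof.
rewrite /zheight; case: (ltnP i (size p)) => hi.
  by rewrite (bigD1 (Ordinal hi)) //= leq_maxl.
by rewrite nth_default.
Qed.

Lemma norm_intrC (m : int) : `|(m%:~R : algC)| = (absz m)%:R.
Proof. by rewrite -intr_norm -abszE. Qed.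

Lemma coef_heightC (p : {poly int}) i : `|((p`_i)%:~R : algC)| <= (zheight p)%:R.
Proof. by rewrite norm_intrC ler_nat coef_height. Qed.

Lemma prod_le_pow (s : seq algC) (B : algC) :
  (forall y, y \in s -> `|y| <= B) -> \prod_(y <- s) `|y| <= B ^+ size s.
Proof.
elim: s => [|x s IH] hs; first by rewrite big_nil expr0.
rewrite big_cons exprS /=; apply: ler_pM.
- exact: normr_ge0.
- by apply: prodr_ge0 => y _; exact: normr_ge0.
- by apply: hs; rewrite inE eqxx.
- by apply: IH => y ys; apply: hs; rewrite inE ys orbT.
Qed.

Lemma root_bound (p : {poly int}) (z : algC) : (1 < size p)%N ->
  root (map_poly intr p) z ->
  `|(lead_coef p)%:~R * z| <= ((size p).-1)%:R * (zheight p)%:R.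
Proof.
move=> sp rz.
apply: (@cauchy_bound _ (fun i : 'I_(size p).-1 => (p`_i)%:~R)).
- by rewrite -ltnS prednK // ltnW.
- by move=> i; apply: coef_heightC.
- by rewrite lead_coefE; apply: coef_heightC.
- by rewrite addrC -horner_split ?(rootP rz) // ltnW.
Qed.

Lemma expn_mono a b e : (a <= b)%N -> (a ^ e <= b ^ e)%N.
Proof. by move=> ab; elim: e => [|e IH] //; rewrite !expnS leq_mul. Qed.

Lemma nat_ineq d H : (0 < d)%N -> (0 < H)%N ->
 ((d+1) * (H*H) * ((d*d+1)*(H*H))^(d*d-1) <
  (2*d+2)^(2*d+3) * 2^(2*d) * (d`!)^(2*d) * (d+1)^(2*d*(d-1)) * H^(2*d^2))%N.
Proof.
move=> d0 H0; set D := (d*d)%N.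
have hH : (H ^ (2 * d ^ 2) = (H*H)^D)%N.
  by rewrite /D mulnn -expnM mulnC.
have L1 : ((d+1) * (H*H) * ((D+1)*(H*H))^(D-1) <= (d+1)^(2*(D-1)+1) * (H*H)^D)%N.
  have D0 : (0 < D)%N by rewrite /D muln_gt0 d0.
  rewrite expnMn mulnACA -expnS subn1 prednK // leq_mul2r; apply/orP; right.
  rewrite [(2 * _ + 1)%N]addn1 expnS; apply: leq_mul => //.
  rewrite expnM; apply: expn_mono; rewrite /D; nia.
have L2 : ((d+1)^(2*d+3+2*d*(d-1)) * (H*H)^D <=
  (2*d+2)^(2*d+3) * 2^(2*d) * (d`!)^(2*d) * (d+1)^(2*d*(d-1)) * H^(2*d^2))%N.
  rewrite hH leq_mul2r; apply/orP; right.
  rewrite expnD; apply: leq_mul => //.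
  rewrite -[X in (X <= _)%N]muln1 -mulnA leq_mul //.
    by apply: expn_mono; lia.
  by rewrite muln_gt0 !expn_gt0 fact_gt0 /=.
apply: leq_ltn_trans L1 _; apply: leq_trans L2; rewrite ltn_mul2r.
apply/andP; split; first by rewrite expn_gt0 muln_gt0 H0.
rewrite ltn_exp2l; last by lia.
rewrite /D; nia.
Qed.

Lemma Eb_gen (R : comNzRingType) (a x y n : R) :
  x * y = n ^+ 2 -> a * x * (a * y) - a ^+ 2 = a ^+ 2 * ((n - 1) * (n + 1)).
Proof. by move=> h; rewrite mulrACA h; ring. Qed.

Theorem mainTheorem3 (lambda : algC) (p : {poly int}) (d H : nat) :
  is_minpoly_Z lambda p -> d = zdeg p -> H = zheight p ->
  `|lambda| != 1 ->
  1 / (sqrtC 3%:R * (2 * d + 2)%:R ^+ (2 * d + 3) * 2%:R ^+ (2 * d)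
       * (d`!)%:R ^+ (2 * d) * (d + 1)%:R ^+ (2 * d * (d - 1))
       * H%:R ^+ (2 * d ^ 2))
  < `| `|lambda| - 1 |.
Proof.
move=> [[p0 _] _ apos rl] Dd DH nl1.
pose P : {poly algC} := map_poly intr p.
have szP : size P = size p by rewrite size_map_inj_poly //; exact: intr_inj.
have sp : (1 < size p)%N.
  by rewrite -szP; apply: root_size_gt1 rl; rewrite -size_poly_eq0 szP size_poly_eq0.
have Dd' : d = (size p).-1 by [].
have d0 : (0 < d)%N by rewrite Dd' -ltnS prednK // ltnW.
set a : int := lead_coef p in apos.
set a' : algC := a%:~R.
have a'0 : 0 < a' by rewrite ltr0z.
have aH : a' <= H%:R.
  by rewrite -(ger0_norm (ltW a'0)) /a' /a lead_coefE DH coef_heightC.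
have H1 : 1 <= H%:R :> algC.
  apply: le_trans aH; rewrite /a' -[1]/((1:int)%:~R) ler_int; exact: apos.
have autP (nu : {rmorphism algC -> algC}) z : root P z -> root P (nu z).
  have E : map_poly nu P = P.
    by rewrite -map_poly_comp; apply: eq_map_poly => x /=; rewrite rmorph_int.
  by move=> rz; rewrite -E fmorph_root.
have bnd z : root P z -> `|a' * z| <= d%:R * H%:R.
  by move=> rz; rewrite Dd' DH; exact: root_bound sp rz.
have rlc : root P (lambda^*) := autP Num.conj_op _ rl.
pose beta := a' * lambda * (a' * lambda^*) - a' ^+ 2.
have Aint_beta : beta \in Aint.
  apply: rpredB; first by apply: rpredM; apply: lead_Aint.
  by apply: rpredX; apply: Aint_int.
have nu_beta (nu : {rmorphism algC -> algC}) :
    nu beta = a' * nu lambda * (a' * nu (lambda^*)) - a' ^+ 2.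
  by rewrite rmorphB !rmorphM ?rmorphXn /a' ?rmorph_int.
pose B : algC := (d%:R * H%:R) ^+ 2 + H%:R ^+ 2.
have bnd_nu (nu : {rmorphism algC -> algC}) : `|nu beta| <= B.
  rewrite nu_beta; apply: le_trans (ler_normB _ _) _; apply: lerD.
    rewrite normrM expr2; apply: (@ler_pM algC); try exact: normr_ge0.
      by apply: bnd; apply: autP.
    by apply: bnd; apply: autP.
  rewrite normrX (ger0_norm (ltW a'0)) !expr2.
  by apply: (@ler_pM algC) => //; exact: ltW.
have Eb : beta = a' ^+ 2 * ((`|lambda| - 1) * (`|lambda| + 1)).
  by apply: Eb_gen; rewrite normCK.
have l1 : 0 < `|lambda| + 1 by apply: (lt_le_trans ltr01); exact: ler_wpDl (normr_ge0 _) (lexx 1).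
have nb : `|beta| = a' ^+ 2 * (`|lambda| + 1) * `| `|lambda| - 1|.
  rewrite Eb normrM normrX ger0_norm ?ltW // normrM (ger0_norm (ltW l1)).
  ring.
have b0 : beta != 0.
  by rewrite Eb mulf_neq0 ?expf_neq0 ?(lt0r_neq0 a'0) // mulf_neq0 ?subr_eq0 ?(lt0r_neq0 l1).
pose q := minCpoly beta.
have [r2 Dr2] := closed_field_poly_normal q.
rewrite (monicP (minCpoly_monic beta)) scale1r in Dr2.
have u2 := minC_uniq beta r2 Dr2.
have conj2 y : y \in r2 -> exists nu : {rmorphism algC -> algC}, nu beta = y.
  by move=> yr; apply: aut_conj; rewrite -/q Dr2 root_prod_XsubC.
have br2 : beta \in r2 by rewrite -root_prod_XsubC -Dr2 root_minCpoly.
have [r Dr] := closed_field_poly_normal P.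
have lcP : lead_coef P = a' by rewrite lead_coef_map_inj //; exact: intr_inj.
rewrite lcP in Dr.
have szr : size r = d.
  have : size P = (size r).+1 by rewrite Dr size_scale ?(lt0r_neq0 a'0) // size_prod_XsubC.
  by rewrite szP Dd' => ->.
have inr z : root P z -> z \in r.
  by rewrite Dr rootZ ?(lt0r_neq0 a'0) // root_prod_XsubC.
pose f := fun u v : algC => a' * u * (a' * v) - a' ^+ 2.
pose S := [seq f u v | u <- r, v <- r].
have sub2 : {subset r2 <= S}.
  move=> y /conj2 [nu <-]; rewrite nu_beta.
  by apply: (allpairs_f f); apply: inr; apply: autP.
have m_le : (size r2 <= d * d)%N.
  by rewrite -szr -(size_allpairs f); apply: uniq_leq_size.
have q0 : q.[0] = \prod_(y <- r2) (- y).
  by rewrite Dr2 horner_prod; apply: eq_bigr => y _; rewrite hornerXsubC sub0r.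
have qint : q.[0] \in Num.int.
  by rewrite horner_coef0; move: Aint_beta; rewrite unfold_in => /polyOverP.
have qnz : q.[0] != 0.
  rewrite q0 prodf_seq_neq0; apply/allP => y /conj2 [nu <-] /=.
  by rewrite oppr_eq0 fmorph_eq0.
have ge1 := norm_intr_ge1 qint qnz.
rewrite q0 normr_prod (big_rem _ br2) /= normrN in ge1.
have B1 : 1 <= B by apply: ler_wpDl; [by rewrite exprn_ge0 // mulr_ge0 | exact: exprn_ege1].
have hrest : \prod_(y <- rem beta r2) `|- y| <= B ^+ (d * d).-1.
  rewrite (eq_bigr (fun y => `|y|)) => [|y _]; last by rewrite normrN.
  apply: le_trans (prod_le_pow (rem beta r2) B _) _.
    by move=> y /mem_rem /conj2 [nu <-]; exact: bnd_nu.
  by rewrite size_rem //; apply: ler_weXn2l => //; rewrite -!subn1 leq_sub2r.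
have ge1' : 1 <= `|beta| * B ^+ (d * d).-1.
  by apply: le_trans ge1 _; apply: ler_wpM2l => //; exact: normr_ge0.
set x := `| `|lambda| - 1 |.
have xpos : 0 < x by rewrite normr_gt0 subr_eq0.
have ea : `|a' * lambda| = a' * `|lambda| by rewrite normrM ger0_norm // ltW.
have hA : a' ^+ 2 * (`|lambda| + 1) <= ((d + 1) * (H * H))%:R.
  have -> : a' ^+ 2 * (`|lambda| + 1) = a' * (a' + `|a' * lambda|) by rewrite ea; ring.
  have -> : ((d + 1) * (H * H))%:R = H%:R * (H%:R + d%:R * H%:R) :> algC.
    by rewrite !natrM natrD; ring.
  apply: (@ler_pM algC) => //; first exact: ltW.
    by apply: addr_ge0; [exact: ltW | exact: normr_ge0].
  by apply: lerD => //; apply: bnd.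
have hB : B = ((d * d + 1) * (H * H))%:R by rewrite /B !natrM natrD; ring.
pose Kn := ((d + 1) * (H * H) * ((d * d + 1) * (H * H)) ^ (d * d - 1))%N.
have K1 : 1 <= Kn%:R * x.
  apply: le_trans ge1' _; rewrite nb /Kn subn1 natrM natrX -hB.
  rewrite mulrAC; apply: (@ler_wpM2r algC); first exact: normr_ge0.
  apply: (@ler_wpM2r algC) => //; apply: exprn_ge0; exact: le_trans B1.
have H0 : (0 < H)%N by rewrite -(ler1n algC).
have s3 : 1 <= sqrtC 3%:R :> algC.
  by rewrite -{1}sqrtC1 ler_sqrtC ?nnegrE ?ler0n ?ler1n.
have KT := nat_ineq d H d0 H0.
rewrite -(ltr_nat algC) in KT.
rewrite !natrM !natrX in KT.
set T := (X in 1 / X < _).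
have Tge : (2 * d + 2)%:R ^+ (2 * d + 3) * 2%:R ^+ (2 * d) * (d`!)%:R ^+ (2 * d)
     * (d + 1)%:R ^+ (2 * d * (d - 1)) * H%:R ^+ (2 * d ^ 2) <= T.
  rewrite /T -!mulrA [sqrtC _ * _]mulrC !mulrA; apply: ler_peMr => //.
  by rewrite !mulr_ge0 ?exprn_ge0 ?ler0n.
have KnT : Kn%:R < T.
  apply: lt_le_trans Tge; rewrite /Kn !natrM !natrX; exact: KT.
have Tpos : 0 < T by apply: le_lt_trans KnT; exact: ler0n.
rewrite ltr_pdivrMr // mulrC.
by apply: le_lt_trans K1 _; rewrite ltr_pM2r.
Qed.
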